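(* Let $G=G_n\langle t_1,\ldots,t_k\rangle$ be a Toeplitz graph. Then the clique number satisfies $\omega(G)\le k+1$, and equality holds if and only if $t_i=it_1$ for every $i\in[k]$.
   Context: For integers $n\ge 2$, $k\ge 1$ and $1\le t_1<t_2<\cdots<t_k\le n-1$, the Toeplitz graph $G_n\langle t_1,\ldots,t_k\rangle$ is the simple graph with vertex set $[n]=\{1,\ldots,n\}$ in which two distinct vertices $i,j$ are adjacent if and only if $|i-j|\in\{t_1,\ldots,t_k\}$. $\omega(G)$ is the maximum number of vertices of a clique of $G$. *)

(* Defs.v *)
From mathcomp Require Import all_boot.
Set Implicit Arguments. Unset Strict Implicit. Unset Printing Implicit Defensive.

(* Vertices of G_n<t_1,...,t_k> are represented by 'I_n (value v stands for
   vertex v+1 of [n]); differences are unaffected by this shift.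
   The generators t_1 < ... < t_k are the list t = [:: t_1; ...; t_k],
   so t_i = nth 0 t i.-1. *)

Definition natdist (a b : nat) : nat := (a - b) + (b - a).

Definition toeplitz_adj (n : nat) (t : seq nat) : rel 'I_n :=
  fun i j => (i != j) && (natdist i j \in t).

Definition is_clique (n : nat) (t : seq nat) (A : {set 'I_n}) : bool :=
  [forall i in A, forall j in A, (i != j) ==> toeplitz_adj t i j].

Definition clique_number (n : nat) (t : seq nat) : nat :=
  \max_(A : {set 'I_n} | is_clique t A) #|A|.

(* Main.v *)
Require Import Defs.
From mathcomp Require Import all_boot zify.
Set Implicit Arguments. Unset Strict Implicit.

Lemma natdistE {a b} : b <= a -> natdist a b = a - b.
Proof. rewrite /natdist => h. lia. Qed.

Lemma clique_adj n t (A : {set 'I_n}) x y :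
  is_clique t A -> x \in A -> y \in A -> x != y -> natdist x y \in t.
Proof.
move=> /forallP H xA yA nxy.
have := H x; rewrite xA /= => /forallP /(_ y); rewrite yA /= nxy /=.
by case/andP.
Qed.

Lemma core n t (A : {set 'I_n}) a0 :
  is_clique t A -> a0 \in A -> (forall x, x \in A -> a0 <= x) ->
  let s := map (fun x : 'I_n => val x - val a0) (enum (A :\ a0)) in
  [/\ uniq s, {subset s <= t} & size s = #|A| - 1].
Proof.
move=> cl a0A amin s; split.
- rewrite map_inj_in_uniq ?enum_uniq // => x y.
  rewrite !mem_enum !inE => /andP[_ xA] /andP[_ yA] e.
  apply: val_inj => /=; move: e; have := amin _ xA; have := amin _ yA; simpl; lia.
- move=> z /mapP[x]; rewrite mem_enum !inE => /andP[nx xA] ->.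
  rewrite -(natdistE (amin _ xA)); exact: (clique_adj cl xA a0A nx).
- by rewrite size_map -cardE (cardsD1 a0 A) a0A add1n subn1.
Qed.

Lemma min_exists n (A : {set 'I_n}) a : a \in A ->
  exists2 a0, a0 \in A & forall x, x \in A -> a0 <= x.
Proof.
move=> aA; case: (arg_minnP (fun i : 'I_n => val i) aA) => a0 a0A H.
by exists a0.
Qed.

Lemma card_bound n t (A : {set 'I_n}) : is_clique t A -> #|A| <= size t + 1.
Proof.
move=> cl; case: (set_0Vmem A) => [->|[a aA]]; first by rewrite cards0.
case: (min_exists aA) => a0 a0A amin.
case: (core cl a0A amin) => u sub sz.
have := uniq_leq_size u sub; by rewrite sz leq_subLR add1n addn1.
Qed.

Lemma ar1 p q r : p - r < q - r -> r <= q -> r <= p -> p < q.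
Proof. lia. Qed.
Lemma ar2 p q r : r <= q -> r <= p -> p < q -> q - r - (p - r) = q - p.
Proof. lia. Qed.

Lemma crux n t (A : {set 'I_n}) : is_clique t A -> #|A| = size t + 1 ->
  sorted ltn t -> 0 < size t ->
  forall x, x \in t -> x != nth 0 t 0 -> nth 0 t 0 < x /\ x - nth 0 t 0 \in t.
Proof.
move=> cl cA st tpos.
have [a aA] : exists a, a \in A.
  by apply/set0Pn; rewrite -card_gt0 cA addn1.
case: (min_exists aA) => a0 a0A amin.
case: (core cl a0A amin) => u sub sz.
have := uniq_min_size u sub; rewrite sz cA addnK leqnn => /(_ isT) [_ eqm].
move=> x xt nx.
have minx : nth 0 t 0 <= x.
  have sl : sorted leq t by apply: sub_sorted st => p q; apply: ltnW.
  rewrite -(nth_index 0 xt).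
  apply: (sorted_leq_nth leq_trans leqnn 0 sl); rewrite ?inE ?index_mem //.
have t0t : nth 0 t 0 \in t by apply: mem_nth.
have /mapP[y] := etrans (eqm x) xt; rewrite mem_enum !inE => /andP[ny yA] ex.
have /mapP[z] := etrans (eqm _) t0t; rewrite mem_enum !inE => /andP[nz zA] ez.
have ay := amin _ yA; have az := amin _ zA.
have lt : nth 0 t 0 < x by rewrite ltn_neqAle eq_sym nx minx.
split=> //.
have yz : z < y. { move: lt ay az; rewrite ex ez. change (val z - val a0 < val y - val a0 -> val a0 <= val y -> val a0 <= val z -> val z < val y). move: (val z) (val y) (val a0) => p q r; exact: ar1. }
have nyz : y != z by apply/eqP => E; rewrite E ltnn in yz.
have := clique_adj cl yA zA nyz; rewrite (natdistE (ltnW yz)) ex ez.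
suff -> : val y - val a0 - (val z - val a0) = val y - val z by [].
move: ay az yz; change (val a0 <= val y -> val a0 <= val z -> val z < val y -> val y - val a0 - (val z - val a0) = val y - val z).
move: (val z) (val y) (val a0) => p q r; exact: ar2.
Qed.

Lemma ar3 x c a : x - c = a * c -> c < x -> x = a.+1 * c.
Proof. rewrite mulSn; lia. Qed.
Lemma ar4 x c i j : i < j -> x - c = i.+1 * c -> c < x -> j.+1 * c < x -> False.
Proof.
move=> ij e cx jx; have := ar3 e cx => ex.
have : i.+2 * c <= j.+1 * c by rewrite leq_mul2r ltnS ij orbT.
lia.
Qed.
Lemma ar5 x c : 0 < c -> c < x -> x <= x - c -> False.
Proof. lia. Qed.

Lemma mult t : sorted ltn t -> 0 < nth 0 t 0 ->
  (forall x, x \in t -> x != nth 0 t 0 -> x - nth 0 t 0 \in t) ->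
  forall j, j < size t -> nth 0 t j = j.+1 * nth 0 t 0.
Proof.
move=> st cpos cl; elim/ltn_ind => -[|j'] IH js; first by rewrite mul1n.
set c := nth 0 t 0 in cpos cl IH *.
have hom := sorted_ltn_nth ltn_trans 0 st.
have sl : sorted leq t by apply: sub_sorted st => p q; apply: ltnW.
have homl := sorted_leq_nth leq_trans leqnn 0 sl.
set x := nth 0 t j'.+1.
have cx : c < x by apply: hom; rewrite ?inE //; apply: leq_trans js.
have jx : nth 0 t j' < x by apply: hom; rewrite ?inE //; apply: ltnW.
have xt : x \in t by apply: mem_nth.
have xc : x != c by rewrite neq_ltn cx orbT.
have yt := cl _ xt xc.
have im : index (x - c) t < size t by rewrite index_mem.
have ni := nth_index 0 yt.
have IHj := IH j' (ltnSn _) (ltnW js).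
case: (ltngtP (index (x - c) t) j') => H.
- have IHi := IH _ (ltn_trans H (ltnSn _)) im.
  rewrite ni in IHi; rewrite IHj in jx; case: (ar4 H IHi cx jx).
- have := homl j'.+1 (index (x - c) t); rewrite !inE => /(_ js im H).
  rewrite ni => /(ar5 cpos cx) [].
- rewrite H IHj in ni; exact: ar3 (esym ni) cx.
Qed.

Lemma natdist_mul a b c : natdist (a * c) (b * c) = natdist a b * c.
Proof. by rewrite /natdist mulnDl !mulnBl. Qed.

Lemma ar6 i j k : i <= k -> j <= k -> i != j -> 1 <= natdist i j <= k.
Proof. rewrite /natdist => /leP ? /leP ? /eqP ?; apply/andP; split; apply/leP; lia. Qed.

Theorem theorem2p8 (n k : nat) (t : seq nat) :
  2 <= n -> 1 <= k -> size t = k -> sorted ltn t ->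
  (forall x, x \in t -> 1 <= x <= n - 1) ->
  clique_number n t <= k + 1 /\
  (clique_number n t = k + 1 <->
   (forall i, 1 <= i <= k -> nth 0 t i.-1 = i * nth 0 t 0)).
Proof.
move=> n2 k1 sz st hb.
have bound : clique_number n t <= k + 1.
  by apply/bigmax_leqP => A /card_bound; rewrite sz.
have t0t : nth 0 t 0 \in t by apply: mem_nth; rewrite sz.
have cpos : 0 < nth 0 t 0 by case/andP: (hb _ t0t).
split=> //; split.
- move=> E.
  have set0c : is_clique t (set0 : {set 'I_n}).
    by apply/forallP => i; rewrite inE.
  have pos : 0 < #|@is_clique n t| by apply/card_gt0P; exists set0.
  have [A Ac HA] := eq_bigmax_cond (fun A : {set 'I_n} => #|A|) pos.
  have HA' : clique_number n t = #|A| := HA.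
  rewrite E in HA'.
  have cl := crux Ac (etrans (esym HA') (congr1 (addn^~ 1) (esym sz))) st (leq_trans k1 (eq_leq (esym sz))).
  have cl' : forall x, x \in t -> x != nth 0 t 0 -> x - nth 0 t 0 \in t.
    by move=> x xt nx; case: (cl x xt nx).
  move=> i /andP[i1 ik].
  have := @mult t st cpos cl' i.-1; rewrite prednK // => -> //.
  by rewrite sz; case: i i1 ik.
- move=> H; apply/eqP; rewrite eqn_leq bound /=.
  case: n n2 hb {bound} => [//|n'] n2 hb.
  set c := nth 0 t 0.
  have kc : k * c = nth 0 t k.-1 by rewrite H ?prednK ?k1 ?leqnn.
  have kcn : k * c < n'.+1.
    have : nth 0 t k.-1 \in t by apply: mem_nth; rewrite sz prednK.
    move/hb => /andP[_]; rewrite -kc subn1 /= => h; apply: leq_ltn_trans h _; exact: ltnSn.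
  have jcn : forall j : 'I_k.+1, j * c < n'.+1.
    move=> j; apply: leq_ltn_trans kcn; rewrite leq_mul2r -ltnS ltn_ord orbT //.
  pose f := fun j : 'I_k.+1 => (inord (j * c) : 'I_n'.+1).
  have fv : forall j, nat_of_ord (f j) = j * c by move=> j; rewrite /f inordK.
  have finj : injective f.
    move=> j1 j2 /(congr1 (@nat_of_ord _)); rewrite !fv => /eqP; rewrite eqn_mul2r.
    by rewrite eqn0Ngt cpos /= => /eqP /val_inj.
  have Ac : is_clique t (f @: [set: 'I_k.+1]).
    apply/forallP => x; apply/implyP => /imsetP[j1 _ ->].
    apply/forallP => y; apply/implyP => /imsetP[j2 _ ->].
    apply/implyP => ne; rewrite /toeplitz_adj ne /= !fv natdist_mul.
    have j12 : (j1 : nat) != j2.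
      by apply: contra ne => /eqP /val_inj ->.
    have /andP[d1 dk] := ar6 (ltn_ord j1 : j1 <= k) (ltn_ord j2 : j2 <= k) j12.
    rewrite -H ?d1 ?dk //; apply: mem_nth; rewrite sz prednK //.
  have := @leq_bigmax_cond _ (@is_clique n'.+1 t) (fun A : {set 'I_n'.+1} => #|A|) _ Ac.
  by rewrite card_imset // cardsT card_ord addn1.
Qed.
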